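(* Let $q_0>0$, $\alpha,\beta\in\mathbb{R}$, $\theta_+\in(0,\pi)$ with $\beta\neq2q_0\cos\theta_+$, and $$q(x,t)=q_0e^{i(\alpha t+\beta x)}\Big[\cos\theta_++i\sin\theta_+\tanh\Big(q_0\sin\theta_+\Big(x-\frac{\alpha t}{\beta-2q_0\cos\theta_+}\Big)\Big)\Big].$$ Define $s(x,t)=\int_x^\infty\partial_t\big(q(x',t)q(-x',-t)\big)\,dx'+\frac{\alpha\beta}{2}$. Then $q$ and $s$ are smooth, $q_{xt}+2sq=0$ on $\mathbb{R}^2$, $s_x=-\partial_t\big(q(x,t)q(-x,-t)\big)$, $s(-x,-t)=s(x,t)$, $s(x,t)\to\alpha\beta/2$ as $|x|\to\infty$, and $q(x,t)\to q_0e^{i(\alpha t+\beta x\pm\theta_+)}$ as $x\to\pm\infty$. *)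

(* Defs.v *)
From Stdlib Require Import Reals.
Open Scope R_scope.

Definition CC := (R * R)%type.
Definition Cre (z : CC) : R := fst z.
Definition Cim (z : CC) : R := snd z.
Definition Cadd (z w : CC) : CC := (Cre z + Cre w, Cim z + Cim w).
Definition Csub (z w : CC) : CC := (Cre z - Cre w, Cim z - Cim w).
Definition Copp (z : CC) : CC := (- Cre z, - Cim z).
Definition Cmul (z w : CC) : CC :=
  (Cre z * Cre w - Cim z * Cim w, Cre z * Cim w + Cim z * Cre w).
Definition RtoC (r : R) : CC := (r, 0).
Definition Cnorm (z : CC) : R := sqrt (Cre z ^ 2 + Cim z ^ 2).
Definition Cexpi (phi : R) : CC := (cos phi, sin phi).

Definition continuous2 (f : R -> R -> R) : Prop :=
  forall x t eps, 0 < eps -> exists delta, 0 < delta /\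
    forall x' t', Rabs (x' - x) < delta -> Rabs (t' - t) < delta ->
      Rabs (f x' t' - f x t) < eps.

Definition partial_x (f g : R -> R -> R) : Prop :=
  forall x t, derivable_pt_lim (fun y => f y t) x (g x t).
Definition partial_t (f g : R -> R -> R) : Prop :=
  forall x t, derivable_pt_lim (fun y => f x y) t (g x t).

(** C^infinity on R^2: all iterated partial derivatives exist and are
    (jointly) continuous; D i j is d_x^i d_t^j f. *)
Definition smooth2 (f : R -> R -> R) : Prop :=
  exists D : nat -> nat -> R -> R -> R,
    D 0%nat 0%nat = f /\
    (forall i j, partial_x (D i j) (D (S i) j)) /\
    (forall i j, partial_t (D i j) (D i (S j))) /\
    (forall i j, continuous2 (D i j)).

Definition Cre2 (f : R -> R -> CC) := fun x t => Cre (f x t).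
Definition Cim2 (f : R -> R -> CC) := fun x t => Cim (f x t).
Definition Csmooth2 (f : R -> R -> CC) : Prop :=
  smooth2 (Cre2 f) /\ smooth2 (Cim2 f).
Definition Cpartial_x (f g : R -> R -> CC) : Prop :=
  partial_x (Cre2 f) (Cre2 g) /\ partial_x (Cim2 f) (Cim2 g).
Definition Cpartial_t (f g : R -> R -> CC) : Prop :=
  partial_t (Cre2 f) (Cre2 g) /\ partial_t (Cim2 f) (Cim2 g).

Definition improper_int_to (f : R -> R) (a L : R) : Prop :=
  (forall b, a <= b -> exists _ : Riemann_integrable f a b, True) /\
  (forall eps, 0 < eps -> exists M, forall b (pr : Riemann_integrable f a b),
      a <= b -> M <= b -> Rabs (RiemannInt pr - L) < eps).
Definition Cimproper_int_to (f : R -> CC) (a : R) (L : CC) : Prop :=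
  improper_int_to (fun y => Cre (f y)) a (Cre L) /\
  improper_int_to (fun y => Cim (f y)) a (Cim L).

Definition qsol (q0 alpha beta thp : R) (x t : R) : CC :=
  Cmul (RtoC q0)
    (Cmul (Cexpi (alpha * t + beta * x))
       (cos thp,
        sin thp * tanh (q0 * sin thp *
                        (x - alpha * t / (beta - 2 * q0 * cos thp))))).

Definition qprod (q : R -> R -> CC) (x t : R) : CC := Cmul (q x t) (q (- x) (- t)).

(* Main.v *)
Require Import Defs.
From Stdlib Require Import Reals Lra FunctionalExtensionality.
Open Scope R_scope.

Lemma cosh_pos y : 0 < cosh y.
Proof. unfold cosh. pose proof (exp_pos y); pose proof (exp_pos (-y)); lra. Qed.

Lemma exp_mul_neg y : exp y * exp (- y) = 1.
Proof. rewrite <- exp_plus. replace (y + - y) with 0 by ring. apply exp_0. Qed.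

Lemma tanh_eq y : tanh y = (exp y - exp (-y)) / (exp y + exp (-y)).
Proof. unfold tanh, sinh, cosh. pose proof (exp_pos y); pose proof (exp_pos (-y)). field. lra. Qed.

Lemma tanh_deriv y : derivable_pt_lim tanh y (1 - tanh y * tanh y).
Proof.
  pose proof (cosh_pos y) as Hc.
  assert (H := derivable_pt_lim_div sinh cosh y _ _ (derivable_pt_lim_sinh y)
            (derivable_pt_lim_cosh y) (Rgt_not_eq _ _ Hc)).
  replace (1 - tanh y * tanh y) with ((cosh y * cosh y - sinh y * sinh y) / (cosh y)²).
  - exact H.
  - unfold tanh, Rsqr. pose proof (exp_mul_neg y).
    assert (cosh y * cosh y - sinh y * sinh y = 1).
    { unfold cosh, sinh. nra. }
    field. lra.
Qed.

Lemma tanh_bound y : Rabs (tanh y) <= 1.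
Proof.
  rewrite tanh_eq. pose proof (exp_pos y); pose proof (exp_pos (-y)).
  apply Rabs_le. split.
  - apply Rmult_le_reg_r with (exp y + exp (-y)); [lra|].
    unfold Rdiv; rewrite Rmult_assoc, Rinv_l; lra.
  - apply Rmult_le_reg_r with (exp y + exp (-y)); [lra|].
    unfold Rdiv; rewrite Rmult_assoc, Rinv_l; lra.
Qed.

Lemma tanh_neg y : tanh (- y) = - tanh y.
Proof. rewrite !tanh_eq, Ropp_involutive. pose proof (exp_pos y); pose proof (exp_pos (-y)). field. lra. Qed.

Lemma tanh_lim eps : 0 < eps -> exists M, forall y, M < y -> 1 - tanh y < eps.
Proof.
  intros He. exists (2 / eps). intros y Hy.
  assert (Hy0 : 0 < y). { assert (0 < 2/eps) by (apply Rdiv_lt_0_compat; lra). lra. }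
  pose proof (exp_ineq1 y (Rgt_not_eq _ _ Hy0)).
  pose proof (exp_pos y); pose proof (exp_pos (-y)). pose proof (exp_mul_neg y).
  rewrite tanh_eq.
  replace (1 - (exp y - exp (- y)) / (exp y + exp (- y))) with (2 * exp (-y) / (exp y + exp (-y))) by (field; lra).
  apply Rmult_lt_reg_r with (exp y + exp (-y)); [lra|].
  unfold Rdiv; rewrite Rmult_assoc, Rinv_l by lra.
  assert (eps * y > 2).
  { apply Rmult_lt_reg_r with (/eps). apply Rinv_0_lt_compat; lra.
    replace (eps * y * / eps) with y by (field; lra). unfold Rdiv in Hy; lra. }
  assert (exp (-y) < 1) by nra.
  nra.
Qed.

Inductive ex := Cst (r : R) | Gc | Gs | GT | Add (e1 e2 : ex) | Mul (e1 e2 : ex).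

Section Expr.
Variables a b k m : R.

Fixpoint ev (e : ex) (x t : R) : R :=
  match e with
  | Cst r => r
  | Gc => cos (b * x + a * t)
  | Gs => sin (b * x + a * t)
  | GT => tanh (k * x + m * t)
  | Add e1 e2 => ev e1 x t + ev e2 x t
  | Mul e1 e2 => ev e1 x t * ev e2 x t
  end.

Definition sech2 := Add (Cst 1) (Mul (Cst (-1)) (Mul GT GT)).

Fixpoint dX (e : ex) : ex :=
  match e with
  | Cst _ => Cst 0
  | Gc => Mul (Cst (- b)) Gs
  | Gs => Mul (Cst b) Gc
  | GT => Mul (Cst k) sech2
  | Add e1 e2 => Add (dX e1) (dX e2)
  | Mul e1 e2 => Add (Mul (dX e1) e2) (Mul e1 (dX e2))
  end.

Fixpoint dT (e : ex) : ex :=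
  match e with
  | Cst _ => Cst 0
  | Gc => Mul (Cst (- a)) Gs
  | Gs => Mul (Cst a) Gc
  | GT => Mul (Cst m) sech2
  | Add e1 e2 => Add (dT e1) (dT e2)
  | Mul e1 e2 => Add (Mul (dT e1) e2) (Mul e1 (dT e2))
  end.

Lemma lin1 (f f' : R -> R) c d x :
  (forall z, derivable_pt_lim f z (f' z)) ->
  derivable_pt_lim (fun y => f (c * y + d)) x (c * f' (c * x + d)).
Proof.
  intros Hf.
  assert (Hl : derivable_pt_lim (fun y => c * y + d) x c).
  { apply (derivable_pt_lim_ext (mult_real_fct c id + fct_cte d)%F).
    - intros z; reflexivity.
    - replace c with (c * 1 + 0) at 2 by ring.
      apply derivable_pt_lim_plus. apply derivable_pt_lim_scal, derivable_pt_lim_id.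
      apply derivable_pt_lim_const. }
  rewrite Rmult_comm.
  apply (derivable_pt_lim_comp (fun y => c * y + d) f x c _ Hl (Hf _)).
Qed.

Lemma lin2 (f f' : R -> R) c d x :
  (forall z, derivable_pt_lim f z (f' z)) ->
  derivable_pt_lim (fun y => f (d + c * y)) x (c * f' (d + c * x)).
Proof.
  intros Hf. apply (derivable_pt_lim_ext (fun y => f (c * y + d))).
  intros; rewrite Rplus_comm; auto.
  rewrite Rplus_comm. apply lin1; auto.
Qed.

Lemma ev_dX e x t : derivable_pt_lim (fun y => ev e y t) x (ev (dX e) x t).
Proof.
  induction e; simpl.
  - apply derivable_pt_lim_const.
  - replace (- b * sin (b * x + a * t)) with (b * - sin (b * x + a * t)) by ring.
    apply (lin1 cos (fun z => - sin z)). apply derivable_pt_lim_cos.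
  - apply (lin1 sin cos). apply derivable_pt_lim_sin.
  - apply (lin1 tanh (fun z => 1 + -1 * (tanh z * tanh z))).
    intros z; replace (1 + -1 * (tanh z * tanh z)) with (1 - tanh z * tanh z) by ring.
    apply tanh_deriv.
  - apply (derivable_pt_lim_plus (fun y => ev e1 y t) (fun y => ev e2 y t)); auto.
  - apply (derivable_pt_lim_mult (fun y => ev e1 y t) (fun y => ev e2 y t)); auto.
Qed.

Lemma ev_dT e x t : derivable_pt_lim (fun y => ev e x y) t (ev (dT e) x t).
Proof.
  induction e; simpl.
  - apply derivable_pt_lim_const.
  - replace (- a * sin (b * x + a * t)) with (a * - sin (b * x + a * t)) by ring.
    apply (lin2 cos (fun z => - sin z)). apply derivable_pt_lim_cos.
  - apply (lin2 sin cos). apply derivable_pt_lim_sin.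
  - apply (lin2 tanh (fun z => 1 + -1 * (tanh z * tanh z))).
    intros z; replace (1 + -1 * (tanh z * tanh z)) with (1 - tanh z * tanh z) by ring.
    apply tanh_deriv.
  - apply (derivable_pt_lim_plus (fun y => ev e1 x y) (fun y => ev e2 x y)); auto.
  - apply (derivable_pt_lim_mult (fun y => ev e1 x y) (fun y => ev e2 x y)); auto.
Qed.

Lemma comm_XT e x t : ev (dT (dX e)) x t = ev (dX (dT e)) x t.
Proof.
  induction e; simpl; try ring.
  - rewrite IHe1, IHe2; ring.
  - rewrite IHe1, IHe2; ring.
Qed.

Lemma dX_ext e1 e2 : (forall x t, ev e1 x t = ev e2 x t) ->
  forall x t, ev (dX e1) x t = ev (dX e2) x t.
Proof.
  intros H x t. apply (uniqueness_limite (fun y => ev e1 y t) x).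
  - apply ev_dX.
  - apply (derivable_pt_lim_ext (fun y => ev e2 y t)). intros; symmetry; auto. apply ev_dX.
Qed.

Lemma iter_comm i e x t : ev (dT (Nat.iter i dX e)) x t = ev (Nat.iter i dX (dT e)) x t.
Proof.
  revert x t; induction i; intros x t; simpl. reflexivity.
  rewrite comm_XT. apply dX_ext. exact IHi.
Qed.

Fixpoint bnd (e : ex) : R :=
  match e with
  | Cst r => Rabs r
  | Gc | Gs | GT => 1
  | Add e1 e2 => bnd e1 + bnd e2
  | Mul e1 e2 => bnd e1 * bnd e2
  end.

Lemma ev_bnd e x t : Rabs (ev e x t) <= bnd e.
Proof.
  induction e; simpl.
  - lra.
  - apply Rabs_le, COS_bound.
  - apply Rabs_le, SIN_bound.
  - apply tanh_bound.
  - eapply Rle_trans; [apply Rabs_triang|lra].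
  - rewrite Rabs_mult. apply Rmult_le_compat; auto; apply Rabs_pos.
Qed.

Lemma bnd_pos e : 0 <= bnd e.
Proof. eapply Rle_trans; [apply Rabs_pos| apply (ev_bnd e 0 0)]. Qed.

Lemma ev_cont e : continuous2 (ev e).
Proof.
  intros x t eps He.
  set (Mx := bnd (dX e)). set (Mt := bnd (dT e)).
  assert (0 <= Mx) by apply bnd_pos. assert (0 <= Mt) by apply bnd_pos.
  exists (eps / (Mx + Mt + 1)). split. apply Rdiv_lt_0_compat; lra.
  intros x' t' Hx Ht.
  assert (H1 : Rabs (ev e x' t' - ev e x t') <= Mx * Rabs (x' - x)).
  { destruct (MVT_abs (fun y => ev e y t') (fun y => ev (dX e) y t') x x') as [c [Hc _]].
    intros; apply ev_dX. rewrite Hc. apply Rmult_le_compat_r. apply Rabs_pos. apply ev_bnd. }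
  assert (H2 : Rabs (ev e x t' - ev e x t) <= Mt * Rabs (t' - t)).
  { destruct (MVT_abs (fun y => ev e x y) (fun y => ev (dT e) x y) t t') as [c [Hc _]].
    intros; apply ev_dT. rewrite Hc. apply Rmult_le_compat_r. apply Rabs_pos. apply ev_bnd. }
  replace (ev e x' t' - ev e x t) with ((ev e x' t' - ev e x t') + (ev e x t' - ev e x t)) by ring.
  eapply Rle_lt_trans; [apply Rabs_triang|].
  assert (Mx * Rabs (x' - x) <= Mx * (eps / (Mx + Mt + 1))).
  { apply Rmult_le_compat_l; lra. }
  assert (Mt * Rabs (t' - t) <= Mt * (eps / (Mx + Mt + 1))).
  { apply Rmult_le_compat_l; lra. }
  assert (Mx * (eps / (Mx + Mt + 1)) + Mt * (eps / (Mx + Mt + 1)) < eps).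
  { apply Rmult_lt_reg_r with (Mx + Mt + 1); [lra|].
    replace ((Mx * (eps / (Mx + Mt + 1)) + Mt * (eps / (Mx + Mt + 1))) * (Mx + Mt + 1))
      with ((Mx + Mt) * eps) by (field; lra). nra. }
  lra.
Qed.

Lemma ev_smooth e : smooth2 (ev e).
Proof.
  exists (fun i j => ev (Nat.iter i dX (Nat.iter j dT e))).
  split; [reflexivity|]. split; [|split].
  - intros i j x t. apply (ev_dX (Nat.iter i dX (Nat.iter j dT e))).
  - intros i j x t. simpl.
    apply (derivable_pt_lim_ext (fun y => ev (Nat.iter i dX (Nat.iter j dT e)) x y)).
    intros; reflexivity.
    rewrite <- iter_comm. apply ev_dT.
  - intros i j. apply ev_cont.
Qed.

End Expr.

Lemma Cnorm_le z : Cnorm z <= Rabs (Cre z) + Rabs (Cim z).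
Proof.
  unfold Cnorm. rewrite <- (sqrt_pow2 (Rabs (Cre z) + Rabs (Cim z))).
  2: pose proof (Rabs_pos (Cre z)); pose proof (Rabs_pos (Cim z)); lra.
  apply sqrt_le_1_alt. rewrite <- (pow2_abs (Cre z)), <- (pow2_abs (Cim z)).
  pose proof (Rabs_pos (Cre z)); pose proof (Rabs_pos (Cim z)). nra.
Qed.

Lemma ftc (g G : R -> R) a b (pr : Riemann_integrable g a b) :
  a <= b -> (forall y, derivable_pt_lim G y (g y)) -> (forall y, continuity_pt g y) ->
  RiemannInt pr = G b - G a.
Proof.
  intros H Hd Hc.
  assert (C0 : forall x, a <= x <= b -> continuity_pt g x) by auto.
  rewrite (RiemannInt_P20 H (FTC_P1 H C0) pr).
  assert (H1 := RiemannInt_P29 H C0).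
  assert (H2 : antiderivative g G a b).
  { split; auto. intros x _. exists (exist _ (g x) (Hd x)). reflexivity. }
  destruct (antiderivative_Ucte g _ _ _ _ H1 H2) as [C H3].
  rewrite !H3; [ring| lra | lra].
Qed.

Lemma improper_lemma (g G : R -> R) a L :
  (forall y, derivable_pt_lim G y (g y)) -> (forall y, continuity_pt g y) ->
  (forall eps, 0 < eps -> exists M, forall b, M <= b -> Rabs (G b) < eps) ->
  L = - G a -> improper_int_to g a L.
Proof.
  intros Hd Hc Hl HL. split.
  - intros b Hb. exists (@continuity_implies_RiemannInt g a b Hb (fun x _ => Hc x)). exact I.
  - intros eps He. destruct (Hl eps He) as [M HM]. exists M. intros b pr Hab HMb.
    rewrite (ftc g G a b pr Hab Hd Hc), HL.
    replace (G b - G a - - G a) with (G b) by ring. auto.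
Qed.

Lemma abs_betw x r : Rabs x <= r -> - r <= x <= r.
Proof. intros H. pose proof (Rle_abs x). pose proof (Rle_abs (-x)). rewrite Rabs_Ropp in *. lra. Qed.

Lemma T_lim_pos k m t eps : 0 < k -> 0 < eps ->
  exists M, forall x, M < x -> 0 <= 1 - tanh (k * x + m * t) < eps.
Proof.
  intros Hk He. destruct (tanh_lim eps He) as [M0 HM0].
  exists ((Rabs M0 + Rabs (m * t)) / k). intros x Hx.
  split. pose proof (tanh_bound (k * x + m * t)) as Hb. apply abs_betw in Hb; lra.
  apply HM0.
  assert (k * x > Rabs M0 + Rabs (m * t)).
  { apply Rmult_lt_compat_l with (r := k) in Hx; auto.
    replace (k * ((Rabs M0 + Rabs (m * t)) / k)) with (Rabs M0 + Rabs (m * t)) in Hx by (field; lra).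
    lra. }
  pose proof (Rle_abs M0). pose proof (Rabs_pos (m * t)). pose proof (Rle_abs (- (m * t))).
  rewrite Rabs_Ropp in *. lra.
Qed.

Lemma T_lim_neg k m t eps : 0 < k -> 0 < eps ->
  exists M, forall x, x < - M -> 0 <= 1 + tanh (k * x + m * t) < eps.
Proof.
  intros Hk He. destruct (T_lim_pos k (- m) t eps Hk He) as [M HM].
  exists M. intros x Hx. specialize (HM (- x) ltac:(lra)).
  replace (k * - x + - m * t) with (- (k * x + m * t)) in HM by ring.
  rewrite tanh_neg in HM. lra.
Qed.

Lemma sech2_lim a b k m t eps : 0 < k -> 0 < eps ->
  exists M, forall x, M < Rabs x -> Rabs (ev a b k m sech2 x t) < eps.
Proof.
  intros Hk He. destruct (T_lim_pos k m t (eps/2) Hk ltac:(lra)) as [M1 H1].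
  destruct (T_lim_neg k m t (eps/2) Hk ltac:(lra)) as [M2 H2].
  exists (Rabs M1 + Rabs M2). intros x Hx. simpl.
  pose proof (tanh_bound (k * x + m * t)) as Hb. apply abs_betw in Hb.
  pose proof (Rle_abs M1); pose proof (Rle_abs M2).
  pose proof (Rabs_pos M1); pose proof (Rabs_pos M2).
  destruct (Rle_lt_dec 0 x).
  - rewrite (Rabs_right x) in Hx by lra. assert (M1 < x) by lra; specialize (H1 x H5).
    set (T := tanh (k * x + m * t)) in *.
    assert (T * T <= 1) by nra.
    rewrite Rabs_right by lra. nra.
  - rewrite (Rabs_left x) in Hx by lra. assert (x < - M2) by lra; specialize (H2 x H5).
    set (T := tanh (k * x + m * t)) in *.
    assert (T * T <= 1) by nra.
    rewrite Rabs_right by lra. nra.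
Qed.

Section Main.
Variables q0 alpha beta thp : R.
Definition cc := cos thp.
Definition SS := sin thp.
Definition Dn := beta - 2 * q0 * cc.
Definition ww := alpha / Dn.
Definition kk := q0 * SS.
Definition mm := - (kk * ww).
Definition E := ev alpha beta kk mm.

Definition eRe := Mul (Cst q0) (Add (Mul Gc (Cst cc)) (Mul (Cst (-1)) (Mul Gs (Mul (Cst SS) GT)))).
Definition eIm := Mul (Cst q0) (Add (Mul Gc (Mul (Cst SS) GT)) (Mul Gs (Cst cc))).
Definition eP := Mul (Cst (q0*q0)) (Add (Cst (cc*cc)) (Mul (Cst (SS*SS)) (Mul GT GT))).
Definition eG := Mul (Cst (q0*q0*SS*SS*ww)) sech2.
Definition eS := Add (Cst (alpha*beta/2)) (Mul (Cst (-1)) eG).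

Lemma Targ x t : q0 * sin thp * (x - alpha * t / (beta - 2 * q0 * cos thp)) = kk * x + mm * t.
Proof. unfold mm, kk, ww, Dn, SS, cc. unfold Rdiv. ring. Qed.

Lemma q_re x t : Cre2 (qsol q0 alpha beta thp) x t = E eRe x t.
Proof.
  unfold Cre2, qsol, E, eRe; simpl. rewrite Targ.
  replace (alpha * t + beta * x) with (beta * x + alpha * t) by ring.
  unfold cc, SS; ring.
Qed.

Lemma q_im x t : Cim2 (qsol q0 alpha beta thp) x t = E eIm x t.
Proof.
  unfold Cim2, qsol, E, eIm; simpl. rewrite Targ.
  replace (alpha * t + beta * x) with (beta * x + alpha * t) by ring.
  unfold cc, SS; ring.
Qed.

Lemma qprod_re x t : Cre2 (qprod (qsol q0 alpha beta thp)) x t = E eP x t.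
Proof.
  unfold Cre2, qprod, qsol, E, eP; simpl. rewrite !Targ.
  replace (alpha * t + beta * x) with (beta * x + alpha * t) by ring.
  replace (alpha * - t + beta * - x) with (- (beta * x + alpha * t)) by ring.
  replace (kk * - x + mm * - t) with (- (kk * x + mm * t)) by ring.
  rewrite cos_neg, sin_neg, tanh_neg.
  pose proof (sin2_cos2 (beta * x + alpha * t)) as H. unfold Rsqr in H.
  set (C := cos (beta * x + alpha * t)) in *. set (Sn := sin (beta * x + alpha * t)) in *.
  transitivity (q0 * q0 * (cc * cc + SS * SS * (tanh (kk * x + mm * t) * tanh (kk * x + mm * t))) * (Sn * Sn + C * C)).
  unfold cc, SS; ring. rewrite H; ring.
Qed.

Lemma qprod_im x t : Cim2 (qprod (qsol q0 alpha beta thp)) x t = 0.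
Proof.
  unfold Cim2, qprod, qsol; simpl. rewrite !Targ.
  replace (alpha * - t + beta * - x) with (- (alpha * t + beta * x)) by ring.
  replace (kk * - x + mm * - t) with (- (kk * x + mm * t)) by ring.
  rewrite cos_neg, sin_neg, tanh_neg. ring.
Qed.

Lemma G_deriv y t : E (dX beta kk eG) y t = E (dT alpha mm eP) y t.
Proof. unfold E, eG, eP, sech2, mm; simpl. ring. Qed.

Lemma sx_eq x t : E (dX beta kk eS) x t = - E (dT alpha mm eP) x t.
Proof. unfold E, eS, eG, eP, sech2, mm; simpl. ring. Qed.

Lemma S_sym x t : E eS (- x) (- t) = E eS x t.
Proof.
  unfold E, eS, eG, sech2; simpl.
  replace (kk * - x + mm * - t) with (- (kk * x + mm * t)) by ring.
  rewrite tanh_neg. ring.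
Qed.

Lemma qxt_re x t : Dn <> 0 ->
  E (dT alpha mm (dX beta kk eRe)) x t
  + (2 * (E eS x t * E eRe x t - 0 * E eIm x t) - 0 * (E eS x t * E eIm x t + 0 * E eRe x t)) = 0.
Proof.
  intros HD. assert (Ha : alpha = ww * Dn) by (unfold ww; field; auto).
  unfold E, eS, eG, eRe, eIm, sech2, mm, kk; simpl.
  set (C := cos (beta * x + alpha * t)). set (Sn := sin (beta * x + alpha * t)).
  set (T := tanh (q0 * SS * x + - (q0 * SS * ww) * t)).
  set (w := ww) in *. clearbody C Sn T w. rewrite Ha. unfold Dn. field.
Qed.

Lemma qxt_im x t : Dn <> 0 ->
  E (dT alpha mm (dX beta kk eIm)) x t
  + (2 * (E eS x t * E eIm x t + 0 * E eRe x t) + 0 * (E eS x t * E eRe x t - 0 * E eIm x t)) = 0.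
Proof.
  intros HD. assert (Ha : alpha = ww * Dn) by (unfold ww; field; auto).
  unfold E, eS, eG, eRe, eIm, sech2, mm, kk; simpl.
  set (C := cos (beta * x + alpha * t)). set (Sn := sin (beta * x + alpha * t)).
  set (T := tanh (q0 * SS * x + - (q0 * SS * ww) * t)).
  set (w := ww) in *. clearbody C Sn T w. rewrite Ha. unfold Dn. field.
Qed.

End Main.

Lemma abs_betw2 x : -1 <= x <= 1 -> Rabs x <= 1.
Proof. intros; apply Rabs_le; lra. Qed.

Section Main2.
Variables q0 alpha beta thp : R.
Notation E := (E q0 alpha beta thp).
Notation eRe := (eRe q0 thp).
Notation eIm := (eIm q0 thp).
Notation eP := (eP q0 thp).
Notation eG := (eG q0 alpha beta thp).
Notation eS := (eS q0 alpha beta thp).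
Notation kk := (kk q0 thp).
Notation mm := (mm q0 alpha beta thp).

Lemma Hq : qsol q0 alpha beta thp = fun x t => (E eRe x t, E eIm x t).
Proof.
  apply functional_extensionality; intro x; apply functional_extensionality; intro t.
  rewrite <- q_re, <- q_im. unfold Cre2, Cim2, Cre, Cim.
  destruct (qsol q0 alpha beta thp x t); reflexivity.
Qed.

Lemma qxt_pair x t : Dn q0 beta thp <> 0 ->
  Cadd (E (dT alpha mm (dX beta kk eRe)) x t, E (dT alpha mm (dX beta kk eIm)) x t)
    (Cmul (RtoC 2) (Cmul (E eS x t, 0) (E eRe x t, E eIm x t))) = (0, 0).
Proof.
  intros HD. unfold Cadd, Cmul, RtoC, Cre, Cim; cbn [fst snd].
  f_equal; [apply qxt_re | apply qxt_im]; auto.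
Qed.

Lemma eG_small t eps : 0 < kk -> 0 < eps ->
  exists M, forall x, M < Rabs x -> Rabs (E eG x t) < eps.
Proof.
  intros Hk He.
  set (co := q0 * q0 * SS thp * SS thp * ww q0 alpha beta thp).
  destruct (sech2_lim alpha beta kk mm t (eps / (Rabs co + 1)) Hk) as [M HM].
  { apply Rdiv_lt_0_compat; [lra|]. pose proof (Rabs_pos co); lra. }
  exists M. intros x Hx. specialize (HM x Hx).
  unfold E, eG. change (Rabs (co * ev alpha beta kk mm sech2 x t) < eps).
  rewrite Rabs_mult. pose proof (Rabs_pos co). pose proof (Rabs_pos (ev alpha beta kk mm sech2 x t)).
  apply Rle_lt_trans with ((Rabs co + 1) * Rabs (ev alpha beta kk mm sech2 x t)). nra.
  apply Rmult_lt_reg_l with (/ (Rabs co + 1)). apply Rinv_0_lt_compat; lra.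
  rewrite <- Rmult_assoc, Rinv_l by lra. unfold Rdiv in HM. lra.
Qed.

Lemma qdev_plus x t : 0 <= 1 - tanh (kk * x + mm * t) ->
  Cnorm (Csub (qsol q0 alpha beta thp x t)
            (Cmul (RtoC q0) (Cexpi (alpha * t + beta * x + thp))))
  <= 2 * Rabs q0 * (1 - tanh (kk * x + mm * t)).
Proof.
  intros HT. eapply Rle_trans; [apply Cnorm_le|].
  unfold Csub, qsol, Cmul, Cexpi, RtoC, Cre, Cim; cbn [fst snd]. rewrite Targ.
  rewrite (cos_plus (alpha * t + beta * x) thp), (sin_plus (alpha * t + beta * x) thp).
  set (T := tanh (kk * x + mm * t)) in *.
  set (C := cos (alpha * t + beta * x)). set (Sn := sin (alpha * t + beta * x)).
  pose proof (COS_bound (alpha * t + beta * x)). pose proof (SIN_bound (alpha * t + beta * x)).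
  pose proof (COS_bound thp). pose proof (SIN_bound thp).
  fold C Sn in H, H0.
  match goal with |- Rabs ?A + Rabs ?B <= _ =>
    replace A with (q0 * ((Sn * sin thp) * (1 - T))) by ring;
    replace B with (q0 * ((- (C * sin thp)) * (1 - T))) by ring end.
  rewrite !Rabs_mult, (Rabs_right (1 - T)) by lra.
  assert (Rabs Sn * Rabs (sin thp) <= 1).
  { apply abs_betw2 in H0. apply abs_betw2 in H2. rewrite <- (Rmult_1_l 1).
    apply Rmult_le_compat; auto using Rabs_pos. }
  assert (Rabs (- C) * Rabs (sin thp) <= 1).
  { apply abs_betw2 in H. apply abs_betw2 in H2. rewrite <- (Rmult_1_l 1), Rabs_Ropp.
    apply Rmult_le_compat; auto using Rabs_pos. }
  pose proof (Rabs_pos q0).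
  rewrite ?Rabs_Ropp, ?Rabs_mult in *. assert (0 <= Rabs q0 * (1 - T)) by (apply Rmult_le_pos; lra). nra.
Qed.

Lemma qdev_minus x t : 0 <= 1 + tanh (kk * x + mm * t) ->
  Cnorm (Csub (qsol q0 alpha beta thp x t)
            (Cmul (RtoC q0) (Cexpi (alpha * t + beta * x - thp))))
  <= 2 * Rabs q0 * (1 + tanh (kk * x + mm * t)).
Proof.
  intros HT. eapply Rle_trans; [apply Cnorm_le|].
  unfold Csub, qsol, Cmul, Cexpi, RtoC, Cre, Cim; cbn [fst snd]. rewrite Targ.
  replace (alpha * t + beta * x - thp) with (alpha * t + beta * x + - thp) by ring. rewrite (cos_plus (alpha * t + beta * x) (- thp)), (sin_plus (alpha * t + beta * x) (- thp)).
  rewrite cos_neg, sin_neg.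
  set (T := tanh (kk * x + mm * t)) in *.
  set (C := cos (alpha * t + beta * x)). set (Sn := sin (alpha * t + beta * x)).
  pose proof (COS_bound (alpha * t + beta * x)). pose proof (SIN_bound (alpha * t + beta * x)).
  pose proof (COS_bound thp). pose proof (SIN_bound thp).
  fold C Sn in H, H0.
  match goal with |- Rabs ?A + Rabs ?B <= _ =>
    replace A with (q0 * ((- (Sn * sin thp)) * (1 + T))) by ring;
    replace B with (q0 * ((C * sin thp) * (1 + T))) by ring end.
  rewrite !Rabs_mult, (Rabs_right (1 + T)) by lra.
  assert (Rabs (- Sn) * Rabs (sin thp) <= 1).
  { apply abs_betw2 in H0. apply abs_betw2 in H2. rewrite <- (Rmult_1_l 1), Rabs_Ropp.
    apply Rmult_le_compat; auto using Rabs_pos. }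
  assert (Rabs C * Rabs (sin thp) <= 1).
  { apply abs_betw2 in H. apply abs_betw2 in H2. rewrite <- (Rmult_1_l 1).
    apply Rmult_le_compat; auto using Rabs_pos. }
  pose proof (Rabs_pos q0).
  rewrite ?Rabs_Ropp, ?Rabs_mult in *. assert (0 <= Rabs q0 * (1 + T)) by (apply Rmult_le_pos; lra). nra.
Qed.

Lemma main_sec (hq0 : 0 < q0) (hth1 : 0 < thp) (hth2 : thp < PI)
  (hbeta : beta <> 2 * q0 * cos thp) :
  let q := qsol q0 alpha beta thp in
  exists (Pt s : R -> R -> CC),
    Cpartial_t (qprod q) Pt /\
    (forall x t, Cimproper_int_to (fun y => Pt y t) x
                   (Csub (s x t) (RtoC (alpha * beta / 2)))) /\
    Csmooth2 q /\ Csmooth2 s /\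
    (exists qx qxt : R -> R -> CC,
        Cpartial_x q qx /\ Cpartial_t qx qxt /\
        forall x t, Cadd (qxt x t) (Cmul (RtoC 2) (Cmul (s x t) (q x t))) = (0, 0)) /\
    Cpartial_x s (fun x t => Copp (Pt x t)) /\
    (forall x t, s (- x) (- t) = s x t) /\
    (forall t eps, 0 < eps -> exists M, forall x, M < Rabs x ->
        Cnorm (Csub (s x t) (RtoC (alpha * beta / 2))) < eps) /\
    (forall t eps, 0 < eps -> exists M, forall x, M < x ->
        Cnorm (Csub (q x t)
                 (Cmul (RtoC q0) (Cexpi (alpha * t + beta * x + thp)))) < eps) /\
    (forall t eps, 0 < eps -> exists M, forall x, x < - M ->
        Cnorm (Csub (q x t)
                 (Cmul (RtoC q0) (Cexpi (alpha * t + beta * x - thp)))) < eps).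
Proof.
  cbv zeta.
  assert (HD : Dn q0 beta thp <> 0).
  { unfold Dn, cc. intro; apply hbeta; lra. }
  assert (Hk : 0 < kk).
  { unfold kk, SS. apply Rmult_lt_0_compat; auto. apply sin_gt_0; auto. }
  exists (fun x t => (E (dT alpha mm eP) x t, 0)), (fun x t => (E eS x t, 0)).
  split.
  { split; intros x t.
    - apply (derivable_pt_lim_ext (fun y => E eP x y)).
      + intros; symmetry; apply qprod_re.
      + apply ev_dT.
    - apply (derivable_pt_lim_ext (fun _ => 0)).
      + intros; symmetry; apply qprod_im.
      + apply derivable_pt_lim_const. }
  split.
  { intros x t; split.
    - apply (improper_lemma _ (fun y => E eG y t)).
      + intros y. cbn [Cre fst]. rewrite <- G_deriv. apply ev_dX.
      + intros y. apply derivable_continuous_pt.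
        exact (exist _ _ (ev_dX alpha beta kk mm (dT alpha mm eP) y t)).
      + intros eps He. destruct (eG_small t eps Hk He) as [M HM].
        exists (Rabs M + 1). intros b Hb. apply HM.
        pose proof (Rle_abs b). pose proof (Rabs_pos M). pose proof (Rle_abs M). lra.
      + unfold Csub, RtoC, Cre; cbn [fst snd]. unfold E, eS; cbn [ev]. field.
    - apply (improper_lemma _ (fun _ => 0)).
      + intros y. apply derivable_pt_lim_const.
      + intros y. apply continuity_pt_const. intros a b; reflexivity.
      + intros eps He. exists 0. intros; rewrite Rabs_R0; auto.
      + unfold Csub, RtoC, Cim; cbn [fst snd]. ring. }
  split.
  { rewrite Hq. split; [exact (ev_smooth alpha beta kk mm eRe) | exact (ev_smooth alpha beta kk mm eIm)]. }
  split.
  { split; [exact (ev_smooth alpha beta kk mm eS) | exact (ev_smooth alpha beta kk mm (Cst 0))]. }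
  split.
  { exists (fun x t => (E (dX beta kk eRe) x t, E (dX beta kk eIm) x t)),
      (fun x t => (E (dT alpha mm (dX beta kk eRe)) x t, E (dT alpha mm (dX beta kk eIm)) x t)).
    rewrite Hq. split; [|split].
    - split; intros x t; apply ev_dX.
    - split; intros x t; apply ev_dT.
    - intros x t. exact (qxt_pair x t HD). }
  split.
  { split; intros x t.
    - change (derivable_pt_lim (fun y => E eS y t) x (- E (dT alpha mm eP) x t)).
      rewrite <- sx_eq. apply ev_dX.
    - change (derivable_pt_lim (fun _ => 0) x (- 0)). rewrite Ropp_0.
      apply derivable_pt_lim_const. }
  split.
  { intros x t. cbv beta. rewrite S_sym. reflexivity. }
  split.
  { intros t eps He. destruct (eG_small t eps Hk He) as [M HM].
    exists M. intros x Hx. eapply Rle_lt_trans; [apply Cnorm_le|].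
    unfold Csub, RtoC, Cre, Cim; cbn [fst snd].
    replace (E eS x t - alpha * beta / 2) with (- E eG x t) by (unfold E, eS; cbn [ev]; field).
    replace (0 - 0) with 0 by ring. rewrite Rabs_Ropp, Rabs_R0, Rplus_0_r. auto. }
  split.
  { intros t eps He.
    destruct (T_lim_pos kk mm t (eps / (2 * q0 + 1)) Hk) as [M HM].
    { apply Rdiv_lt_0_compat; lra. }
    exists M. intros x Hx. specialize (HM x Hx).
    eapply Rle_lt_trans; [apply qdev_plus; lra|].
    rewrite Rabs_right by lra.
    apply Rle_lt_trans with (2 * q0 * (eps / (2 * q0 + 1))).
    apply Rmult_le_compat_l; lra.
    apply Rmult_lt_reg_r with (2 * q0 + 1); [lra|].
    unfold Rdiv. rewrite Rmult_assoc, (Rmult_assoc eps), Rinv_l by lra. nra. }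
  { intros t eps He.
    destruct (T_lim_neg kk mm t (eps / (2 * q0 + 1)) Hk) as [M HM].
    { apply Rdiv_lt_0_compat; lra. }
    exists M. intros x Hx. specialize (HM x Hx).
    eapply Rle_lt_trans; [apply qdev_minus; lra|].
    rewrite Rabs_right by lra.
    apply Rle_lt_trans with (2 * q0 * (eps / (2 * q0 + 1))).
    apply Rmult_le_compat_l; lra.
    apply Rmult_lt_reg_r with (2 * q0 + 1); [lra|].
    unfold Rdiv. rewrite Rmult_assoc, (Rmult_assoc eps), Rinv_l by lra. nra. }
Qed.

End Main2.

Theorem mainTheorem13 (q0 alpha beta thp : R)
  (hq0 : 0 < q0) (hth1 : 0 < thp) (hth2 : thp < PI)
  (hbeta : beta <> 2 * q0 * cos thp) :
  let q := qsol q0 alpha beta thp in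
  exists (Pt s : R -> R -> CC),
    (* Pt = d/dt ( q(x,t) q(-x,-t) ) *)
    Cpartial_t (qprod q) Pt /\
    (* s(x,t) = int_x^oo Pt(x',t) dx' + alpha beta / 2 (integral converges) *)
    (forall x t, Cimproper_int_to (fun y => Pt y t) x
                   (Csub (s x t) (RtoC (alpha * beta / 2)))) /\
    (* smoothness *)
    Csmooth2 q /\ Csmooth2 s /\
    (* q_xt + 2 s q = 0 *)
    (exists qx qxt : R -> R -> CC,
        Cpartial_x q qx /\ Cpartial_t qx qxt /\
        forall x t, Cadd (qxt x t) (Cmul (RtoC 2) (Cmul (s x t) (q x t))) = (0, 0)) /\
    (* s_x = - d/dt (q(x,t) q(-x,-t)) *)
    Cpartial_x s (fun x t => Copp (Pt x t)) /\
    (* symmetry *)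
    (forall x t, s (- x) (- t) = s x t) /\
    (* s -> alpha beta / 2 as |x| -> oo *)
    (forall t eps, 0 < eps -> exists M, forall x, M < Rabs x ->
        Cnorm (Csub (s x t) (RtoC (alpha * beta / 2))) < eps) /\
    (* q -> q0 e^{i(alpha t + beta x + thp)} as x -> +oo *)
    (forall t eps, 0 < eps -> exists M, forall x, M < x ->
        Cnorm (Csub (q x t)
                 (Cmul (RtoC q0) (Cexpi (alpha * t + beta * x + thp)))) < eps) /\
    (* q -> q0 e^{i(alpha t + beta x - thp)} as x -> -oo *)
    (forall t eps, 0 < eps -> exists M, forall x, x < - M ->
        Cnorm (Csub (q x t)
                 (Cmul (RtoC q0) (Cexpi (alpha * t + beta * x - thp)))) < eps).
Proof.
  exact (main_sec q0 alpha beta thp hq0 hth1 hth2 hbeta).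
Qed.
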